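(* $o(\mathsf{T_f}(1))=\omega$.
   Context: $1$ denotes the one-element quasi-order $\{0\}$. Trees: for a non-empty quasi-order $Q$, $\mathsf{T_f}(Q)$ is the smallest class containing the leaf $\cdot q$ for each $q\in Q$, and containing $\cdot(\tau_0,\dots,\tau_{k-1})$ (an unlabelled root whose children are the $\tau_i$) for every finite set $\{\tau_0,\dots,\tau_{k-1}\}\subseteq\mathsf{T_f}(Q)$ with $k\ge1$. Its order $\le_T$ is defined recursively: - $\cdot x\le_T\cdot y$ iff $x\le_Q y$; - $\cdot x\le_T\cdot(\tau_j)_{j<l}$ iff $\cdot x\le_T\tau_j$ for some $j$; - $\cdot(\sigma_i)_{i<k}\le_T\cdot(\tau_j)_{j<l}$ iff every $\sigma_i$ is $\le_T$ some $\tau_j$; - a non-leaf tree is never $\le_T$ a leaf. For a well-quasi-order $P$, $o(P)$ is the supremum of the order types of linearizations of $P$, i.e. linear quasi-orders on the same set extending its order. *)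

(* Defs.v *)
From Stdlib Require Import List Arith.
Import ListNotations.

Inductive rtree (A : Type) : Type :=
| RLeaf : A -> rtree A
| RNode : list (rtree A) -> rtree A.
Arguments RLeaf {A} _.
Arguments RNode {A} _.

Fixpoint wf_tree {A : Type} (t : rtree A) : Prop :=
  match t with
  | RLeaf _ => True
  | RNode ts =>
      ts <> [] /\
      (fix allwf (l : list (rtree A)) : Prop :=
         match l with
         | [] => True
         | u :: l' => wf_tree u /\ allwf l'
         end) ts
  end.

Section TreeOrder.
Variables (A : Type) (leA : A -> A -> Prop).

Fixpoint leaf_le (x : A) (t : rtree A) : Prop :=
  match t with
  | RLeaf y => leA x y
  | RNode ts =>
      (fix ex (l : list (rtree A)) : Prop :=
         match l with
         | [] => False
         | u :: l' => leaf_le x u \/ ex l'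
         end) ts
  end.

Fixpoint tree_le (s t : rtree A) {struct s} : Prop :=
  match s with
  | RLeaf x => leaf_le x t
  | RNode ss =>
      match t with
      | RLeaf _ => False
      | RNode ts =>
          (fix allc (l : list (rtree A)) : Prop :=
             match l with
             | [] => True
             | si :: l' => (exists tj, In tj ts /\ tree_le si tj) /\ allc l'
             end) ss
      end
  end.
End TreeOrder.

Definition Tf (A : Type) : Type := { t : rtree A | wf_tree t }.
Definition Tf_le {A : Type} (leA : A -> A -> Prop) (s t : Tf A) : Prop :=
  tree_le A leA (proj1_sig s) (proj1_sig t).

Definition one_le (x y : unit) : Prop := True.

Definition linearization {T : Type} (le L : T -> T -> Prop) : Prop :=
  (forall x, L x x) /\
  (forall x y z, L x y -> L y z -> L x z) /\
  (forall x y, L x y \/ L y x) /\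
  (forall x y, le x y -> L x y) /\
  (forall x y, le x y -> ~ le y x -> ~ L y x).

(* The order type of the linear quasi-order L is <= omega: L is (the pullback
   of) a suborder of (nat, <=). *)
Definition otype_le_omega {T : Type} (L : T -> T -> Prop) : Prop :=
  exists f : T -> nat, forall x y, L x y <-> f x <= f y.

Definition otype_ge_nat {T : Type} (L : T -> T -> Prop) (n : nat) : Prop :=
  exists s : nat -> T, forall i j, i < j -> j < n -> ~ L (s j) (s i).

(* o(P) = omega: every linearization has order type <= omega, and the order
   types of linearizations are unbounded below omega (so their sup is omega). *)
Definition max_otype_is_omega {T : Type} (le : T -> T -> Prop) : Prop :=
  (forall L, linearization le L -> otype_le_omega L) /\
  (forall n : nat, exists L, linearization le L /\ otype_ge_nat L n).

(* Main.v *)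
Require Import Defs.
From Stdlib Require Import List Arith Lia.
Import ListNotations.

Section Aux.
Variable A : Type.

Fixpoint height (t : rtree A) : nat :=
  match t with
  | RLeaf _ => 0
  | RNode ts =>
      S ((fix mx (l : list (rtree A)) : nat :=
            match l with
            | [] => 0
            | u :: l' => max (height u) (mx l')
            end) ts)
  end.

Fixpoint maxl (l : list (rtree A)) : nat :=
  match l with
  | [] => 0
  | u :: l' => max (height u) (maxl l')
  end.

Lemma height_node ts : height (RNode ts) = S (maxl ts).
Proof. simpl. f_equal. Qed.

Lemma rtree_ind' (P : rtree A -> Prop) :
  (forall a, P (RLeaf a)) -> (forall ts, Forall P ts -> P (RNode ts)) -> forall t, P t.
Proof.
  intros HL HN. fix IH 1. intros [a|ts]. apply HL. apply HN.
  induction ts as [|u ts IHts]. constructor. constructor. apply IH. exact IHts.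
Qed.

Lemma wf_node ts : wf_tree (RNode ts) <-> ts <> [] /\ Forall (@wf_tree A) ts.
Proof.
  simpl. split; intros [H1 H2]; split; auto; clear H1.
  - induction ts as [|u ts IHts]; simpl in *; auto. destruct H2; constructor; auto.
  - induction ts as [|u ts IHts]; simpl in *; auto. inversion H2; subst. split. auto. exact (IHts H3).
Qed.

Variable leA : A -> A -> Prop.

Lemma leaf_le_node x ts : leaf_le A leA x (RNode ts) <-> Exists (leaf_le A leA x) ts.
Proof.
  simpl. induction ts; simpl. split; [tauto| intro H; inversion H].
  split. intros [H|H]. constructor; auto. constructor 2; apply IHts; auto.
  intro H; inversion H; subst; auto. right; apply IHts; auto.
Qed.

Lemma tree_le_node ss ts : tree_le A leA (RNode ss) (RNode ts) <->
  Forall (fun si => exists tj, In tj ts /\ tree_le A leA si tj) ss.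
Proof.
  simpl. induction ss; simpl. split; auto.
  split. intros [H1 H2]. constructor; auto; apply IHss; auto.
  intro H; inversion H; subst; split; auto; apply IHss; auto.
Qed.

Lemma maxl_le l m : maxl l <= m <-> Forall (fun x => height x <= m) l.
Proof.
  induction l; simpl. split; auto; lia.
  split. intro H. constructor. lia. apply IHl; lia.
  intro H; inversion H; subst. apply IHl in H3. lia.
Qed.

Lemma maxl_in l x : In x l -> height x <= maxl l.
Proof.
  induction l; simpl; [tauto|]. intros [->|H]. lia. specialize (IHl H); lia.
Qed.

Lemma maxl_attained l : l <> [] -> exists x, In x l /\ height x = maxl l.
Proof.
  induction l as [|a l IHl]; [tauto|]. intros _. simpl.
  destruct l as [|b l']. exists a; simpl; split; auto; lia.
  destruct IHl as [x [Hx Hh]]. discriminate.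
  destruct (Nat.le_ge_cases (height a) (maxl (b :: l'))).
  exists x. split. right; auto. lia.
  exists a. split; auto. lia.
Qed.

End Aux.

Lemma leaf_le_wf (t : rtree unit) x : wf_tree t -> leaf_le unit one_le x t.
Proof.
  induction t as [a|ts IH] using rtree_ind'.
  intros; simpl; exact I.
  intro W. apply wf_node in W. destruct W as [Hne Hw].
  apply leaf_le_node. destruct ts as [|u ts]; [congruence|].
  constructor. inversion IH; inversion Hw; subst; auto.
Qed.

Lemma tree_le_height (s : rtree unit) : wf_tree s -> forall t, wf_tree t ->
  (tree_le unit one_le s t <-> height unit s <= height unit t).
Proof.
  induction s as [a|ss IH] using rtree_ind'.
  - intros _ t Wt. simpl. split; intros; [lia|]. apply leaf_le_wf; auto.
  - intros Ws t Wt. apply wf_node in Ws. destruct Ws as [Hsne Hsw].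
    destruct t as [b|ts].
    + simpl. split; [tauto|]. lia.
    + apply wf_node in Wt. destruct Wt as [Htne Htw].
      rewrite tree_le_node, !height_node.
      assert (Hall : Forall (fun si => wf_tree si /\ forall t, wf_tree t ->
               (tree_le unit one_le si t <-> height unit si <= height unit t)) ss).
      { rewrite Forall_forall in *. intros x Hx. split; auto. }
      rewrite Forall_forall in Hall, Htw.
      split.
      * intro H. enough (maxl unit ss <= maxl unit ts) by lia.
        apply maxl_le. rewrite Forall_forall in *. intros x Hx.
        destruct (H x Hx) as [tj [Hin Hle]].
        apply (proj2 (Hall x Hx)) in Hle; auto.
        pose proof (maxl_in unit ts tj Hin). lia.
      * intro H. rewrite Forall_forall. intros x Hx.
        destruct (maxl_attained unit ts Htne) as [tj [Hin Heq]].
        exists tj. split; auto. apply (proj2 (Hall x Hx)); auto.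
        pose proof (maxl_in unit ss x Hx). lia.
Qed.

Definition hT (x : Tf unit) : nat := height unit (proj1_sig x).

Lemma Tf_le_h x y : Tf_le one_le x y <-> hT x <= hT y.
Proof.
  destruct x as [x Wx], y as [y Wy]. unfold Tf_le, hT; simpl.
  apply tree_le_height; auto.
Qed.

Fixpoint chain (n : nat) : rtree unit :=
  match n with 0 => RLeaf tt | S n => RNode [chain n] end.

Lemma chain_wf n : wf_tree (chain n).
Proof. induction n; simpl; auto. split; [discriminate|auto]. Qed.

Lemma chain_h n : height unit (chain n) = n.
Proof. induction n; simpl; auto. rewrite IHn. lia. Qed.

Theorem lemma3p12 : max_otype_is_omega (@Tf_le unit one_le).
Proof.
  split.
  - intros L [Hr [Ht [Htot [Hle Hlt]]]]. exists hT. intros x y. split.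
    + intro H. destruct (Nat.le_gt_cases (hT x) (hT y)); auto.
      exfalso. apply (Hlt y x).
      * apply Tf_le_h; lia.
      * rewrite Tf_le_h; lia.
      * exact H.
    + intro H. apply Hle, Tf_le_h; auto.
  - intro n. exists (Tf_le one_le). split.
    + repeat split.
      * intro x; apply Tf_le_h; lia.
      * intros x y z H1 H2; rewrite Tf_le_h in *; lia.
      * intros x y; rewrite !Tf_le_h; lia.
      * auto.
      * intros x y _ H; exact H.
    + exists (fun i => exist _ (chain i) (chain_wf i)).
      intros i j Hij _ H. apply Tf_le_h in H. unfold hT in H; simpl in H.
      rewrite !chain_h in H. lia.
Qed.
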